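(* Let $X=(X_k)$ be a sequence of fuzzy numbers, $0<\beta\le1$, $m\ge0$ an integer, and $\theta=(k_r)$ a lacunary sequence. If $\limsup_r q_r<\infty$, then $S_\theta^\beta(F,\Delta^m)\subset S(F,\Delta^m)$.
   Context: A fuzzy number is a map $X:\mathbb{R}\to[0,1]$ which is normal, fuzzy convex, upper semicontinuous, with compact closure of $\{t:X(t)>0\}$; $L(\mathbb{R})$ is the set of fuzzy numbers. Level sets $[X]^\alpha=\{t:X(t)\ge\alpha\}$ ($\alpha\in(0,1]$), $[X]^0=\overline{\{t:X(t)>0\}}$, are compact intervals $[u^\alpha,v^\alpha]$. Subtraction: $[X-Y]^\alpha=[u_1^\alpha-v_2^\alpha,v_1^\alpha-u_2^\alpha]$. Metric: $d(X,Y)=\sup_{\alpha\in[0,1]}\max\{|u_1^\alpha-u_2^\alpha|,|v_1^\alpha-v_2^\alpha|\}$. $(\Delta^0X)_k=X_k$, $(\Delta^1X)_k=X_k-X_{k+1}$, $(\Delta^mX)_k=(\Delta^1(\Delta^{m-1}X))_k$. A lacunary sequence is an increasing integer sequence $\theta=(k_r)_{r\ge0}$ with $k_0=0$, $h_r=k_r-k_{r-1}\to\infty$; $I_r=(k_{r-1},k_r]$, $q_r=k_r/k_{r-1}$. $S_\theta^\beta(F,\Delta^m)$: sequences $X$ with some $X_0\in L(\mathbb{R})$ such that for all $\varepsilon>0$, $\lim_r\frac{1}{h_r^\beta}|\{k\in I_r:d(\Delta^mX_k,X_0)\ge\varepsilon\}|=0$. $S(F,\Delta^m)$: sequences $X$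 with some $X_0\in L(\mathbb{R})$ such that for all $\varepsilon>0$, $\lim_{n\to\infty}\frac{1}{n}|\{k\le n:d(\Delta^mX_k,X_0)\ge\varepsilon\}|=0$. *)

(* Defs.v *)
From Stdlib Require Import Reals Lra ClassicalEpsilon.
From Coquelicot Require Import Coquelicot.
Open Scope R_scope.

Definition closure_R (A : R -> Prop) (t : R) : Prop :=
  forall eps : R, 0 < eps -> exists s, A s /\ Rabs (s - t) < eps.

Definition is_fuzzy_number (X : R -> R) : Prop :=
  (forall t, 0 <= X t <= 1) /\
  (exists t0, X t0 = 1) /\
  (forall s t l, 0 <= l <= 1 -> Rmin (X s) (X t) <= X (l * s + (1 - l) * t)) /\
  (forall t0 eps, 0 < eps ->
     exists delta, 0 < delta /\ forall t, Rabs (t - t0) < delta -> X t < X t0 + eps) /\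
  (* closure of the support {t | X t > 0} is compact, i.e. (Heine-Borel) bounded *)
  (exists M, forall t, closure_R (fun s => 0 < X s) t -> Rabs t <= M).

Definition FN : Type := { X : R -> R | is_fuzzy_number X }.

Definition levelset (X : R -> R) (a : R) (t : R) : Prop :=
  if Rlt_dec 0 a then a <= X t else closure_R (fun s => 0 < X s) t.

Definition lev_lo (X : R -> R) (a : R) : R := real (Glb_Rbar (levelset X a)).
Definition lev_hi (X : R -> R) (a : R) : R := real (Lub_Rbar (levelset X a)).

(** Subtraction: the fuzzy number whose a-level sets are
    [u1^a - v2^a, v1^a - u2^a]; its membership function is reconstructed
    from these level sets as t |-> sup ({0} U {a in (0,1] | t in level a}). *)
Definition fsub (X Y : R -> R) : R -> R := fun t =>
  real (Lub_Rbar (fun a => 0 <= a <= 1 /\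
     (a = 0 \/ (lev_lo X a - lev_hi Y a <= t /\ t <= lev_hi X a - lev_lo Y a)))).

Definition fdist (X Y : R -> R) : R :=
  real (Lub_Rbar (fun x => exists a, 0 <= a <= 1 /\
     x = Rmax (Rabs (lev_lo X a - lev_lo Y a)) (Rabs (lev_hi X a - lev_hi Y a)))).

Fixpoint Delta (m : nat) (X : nat -> R -> R) : nat -> R -> R :=
  match m with
  | O => X
  | S m' => fun k => fsub (Delta m' X k) (Delta m' X (S k))
  end.

(** Number of k in {1,...,n} with P k. *)
Fixpoint count_upto (P : nat -> Prop) (n : nat) : nat :=
  match n with
  | O => O
  | S n' => (count_upto P n' +
             (if excluded_middle_informative (P (S n')) then 1 else 0))%nat
  end.

Definition lacunary (theta : nat -> nat) : Prop :=
  theta O = O /\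
  (forall r, (theta r < theta (S r))%nat) /\
  is_lim_seq (fun r => INR (theta r - theta (r - 1)%nat)) p_infty.

Definition h_r (theta : nat -> nat) (r : nat) : nat := (theta r - theta (r - 1)%nat)%nat.

Definition q_r (theta : nat -> nat) (r : nat) : R := INR (theta r) / INR (theta (r - 1)%nat).

(** |{k in I_r : P k}| with I_r = (k_{r-1}, k_r]. *)
Definition count_Ir (theta : nat -> nat) (P : nat -> Prop) (r : nat) : nat :=
  (count_upto P (theta r) - count_upto P (theta (r - 1)%nat))%nat.

Definition in_S_theta_beta (theta : nat -> nat) (beta : R) (m : nat)
    (X : nat -> FN) : Prop :=
  exists X0 : FN, forall eps, 0 < eps ->
    is_lim_seq (fun r =>
      INR (count_Ir theta
             (fun k => eps <= fdist (Delta m (fun j => proj1_sig (X j)) k) (proj1_sig X0)) r)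
      / Rpower (INR (h_r theta r)) beta) 0.

Definition in_S (m : nat) (X : nat -> FN) : Prop :=
  exists X0 : FN, forall eps, 0 < eps ->
    is_lim_seq (fun n =>
      INR (count_upto
             (fun k => eps <= fdist (Delta m (fun j => proj1_sig (X j)) k) (proj1_sig X0)) n)
      / INR n) 0.

(* Main.v *)
Require Import Defs.
From Stdlib Require Import Reals Lra Lia Arith ClassicalEpsilon.
From Coquelicot Require Import Coquelicot.
Open Scope R_scope.

Lemma count_mono P n k : (count_upto P n <= count_upto P (k + n))%nat.
Proof. induction k; simpl; [lia|]. destruct (excluded_middle_informative _); lia. Qed.

Lemma count_mono' P a b : (a <= b)%nat -> (count_upto P a <= count_upto P b)%nat.
Proof. intros H. replace b with ((b - a) + a)%nat by lia. apply count_mono. Qed.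

Lemma theta_mono theta : (forall r, (theta r < theta (S r))%nat) ->
  forall a b, (a <= b)%nat -> (theta a <= theta b)%nat.
Proof.
  intros H a b Hab. induction Hab; [lia|]. specialize (H m). lia.
Qed.

Lemma theta_ge theta : theta O = O -> (forall r, (theta r < theta (S r))%nat) ->
  forall r, (r <= theta r)%nat.
Proof. intros H0 H r. induction r; [lia|]. specialize (H r). lia. Qed.

Lemma find_r theta : (forall r, (theta r < theta (S r))%nat) -> theta O = O ->
  forall r n, (1 <= n)%nat -> (n <= theta r)%nat ->
  exists r', (1 <= r')%nat /\ (theta (r' - 1) < n)%nat /\ (n <= theta r')%nat.
Proof.
  intros Hinc H0 r. induction r; intros n H1 H2.
  - lia.
  - destruct (le_lt_dec n (theta r)) as [Hle|Hlt].
    + apply IHr; auto.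
    + exists (S r). simpl. replace (r - 0)%nat with r by lia. repeat split; lia.
Qed.

Theorem theorem2p11 (theta : nat -> nat) (beta : R) (m : nat) :
  0 < beta <= 1 ->
  lacunary theta ->
  Rbar_lt (LimSup_seq (q_r theta)) p_infty ->
  forall X : nat -> FN, in_S_theta_beta theta beta m X -> in_S m X.
Proof.
  intros Hb Hlac Hls X [X0 HX]. exists X0. intros eps Heps.
  specialize (HX eps Heps).
  set (P := fun k => eps <= fdist (Defs.Delta m (fun j => proj1_sig (X j)) k) (proj1_sig X0)) in *.
  destruct Hlac as [H0 [Hinc _]].
  assert (HH : exists H, 1 <= H /\ exists R0, forall r, (R0 <= r)%nat -> q_r theta r <= H).
  { destruct (ex_LimSup_seq (q_r theta)) as [l Hl].
    rewrite (is_LimSup_seq_unique _ _ Hl) in Hls.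
    destruct l as [l| |]; simpl in Hls.
    - destruct (Hl (mkposreal 1 Rlt_0_1)) as [_ [N HN]].
      exists (Rmax 1 (l + 1)). split; [apply Rmax_l|]. exists N. intros r Hr.
      specialize (HN r Hr). simpl in HN. pose proof (Rmax_r 1 (l+1)). lra.
    - contradiction.
    - destruct (Hl 1) as [N HN]. exists 1. split; [lra|]. exists N.
      intros r Hr. specialize (HN r Hr). lra. }
  destruct HH as [H [HH1 [R0 HR0]]].
  apply is_lim_seq_spec. intros e.
  assert (Hep : 0 < e / (2 * H)).
  { pose proof (cond_pos e). apply Rdiv_lt_0_compat; lra. }
  set (eps' := e / (2 * H)) in *.
  apply is_lim_seq_spec in HX.
  destruct (HX (mkposreal eps' Hep)) as [N1 HN1].
  set (N := S N1).
  set (C := fun n => INR (count_upto P n)).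
  assert (HA : forall r, (N <= r)%nat ->
     INR (count_Ir theta P r) <= eps' * INR (h_r theta r)).
  { intros r Hr. specialize (HN1 r ltac:(unfold N in Hr; lia)). simpl in HN1.
    rewrite Rminus_0_r in HN1.
    pose proof (Rle_abs (INR (count_Ir theta P r) / Rpower (INR (h_r theta r)) beta)).
    assert (Hh : 1 <= INR (h_r theta r)).
    { unfold h_r. replace r with (S (r - 1)) at 1 by (unfold N in Hr; lia).
      specialize (Hinc (r - 1)%nat). rewrite <- INR_1. apply le_INR. lia. }
    assert (Hp : Rpower (INR (h_r theta r)) beta <= INR (h_r theta r)).
    { rewrite <- (Rpower_1 (INR (h_r theta r))) at 2 by lra.
      apply Rle_Rpower; lra. }
    assert (Hpos : 0 < Rpower (INR (h_r theta r)) beta) by (unfold Rpower; apply exp_pos).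
    set (c := INR (count_Ir theta P r)) in *.
    set (Rp := Rpower (INR (h_r theta r)) beta) in *.
    unfold Rdiv in *.
    replace c with (c * / Rp * Rp) by (field; lra).
    set (a := c * / Rp) in *. nra. }
  assert (HB : forall k, C (theta (k + N)%nat) <=
      C (theta N) + eps' * (INR (theta (k + N)%nat) - INR (theta N))).
  { induction k.
    - simpl. lra.
    - specialize (HA (S k + N)%nat ltac:(lia)).
      unfold count_Ir, h_r in HA.
      replace (S k + N - 1)%nat with (k + N)%nat in HA by lia.
      pose proof (count_mono' P (theta (k + N)%nat) (theta (S k + N)%nat)
        ltac:(specialize (Hinc (k+N)%nat); simpl; lia)).
      pose proof (Hinc (k+N)%nat) as Hk.
      change (S (k + N)) with (S k + N)%nat in Hk.
      rewrite !minus_INR in HA by lia.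
      unfold C in *. lra. }
  set (K := C (theta N)).
  assert (HK : is_lim_seq (fun n => K * / INR n) 0).
  { replace (Finite 0) with (Rbar_mult K (Rbar_inv p_infty)) by (simpl; f_equal; ring).
    apply is_lim_seq_scal_l. apply is_lim_seq_inv; [apply is_lim_seq_INR| discriminate]. }
  apply is_lim_seq_spec in HK.
  destruct (HK (mkposreal (e/2) ltac:(pose proof (cond_pos e); lra))) as [N2 HN2].
  set (M := (N + R0 + 2)%nat).
  exists (N2 + S (theta M))%nat. intros n Hn.
  specialize (HN2 n ltac:(lia)). simpl in HN2. rewrite Rminus_0_r in HN2.
  destruct (find_r theta Hinc H0 n n ltac:(lia) (theta_ge theta H0 Hinc n))
    as [r [Hr1 [Hr2 Hr3]]].
  assert (HrM : (M < r)%nat).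
  { destruct (le_lt_dec r M) as [Hle|]; [|auto].
    pose proof (theta_mono theta Hinc _ _ Hle). lia. }
  assert (Hq := HR0 r ltac:(unfold M in HrM; lia)). unfold q_r in Hq.
  assert (Ht1 : (0 < theta (r - 1))%nat).
  { pose proof (theta_mono theta Hinc 1 (r-1)%nat ltac:(unfold M in HrM; lia)).
    specialize (Hinc O). lia. }
  apply lt_INR in Ht1. simpl in Ht1.
  assert (Htr : INR (theta r) <= H * INR (theta (r - 1)%nat)).
  { apply (Rmult_le_compat_r (INR (theta (r-1)%nat))) in Hq; [|lra].
    unfold Rdiv in Hq. rewrite Rmult_assoc, Rinv_l, Rmult_1_r in Hq; lra. }
  apply lt_INR in Hr2.
  pose proof (HB (r - N)%nat) as HBr.
  replace (r - N + N)%nat with r in HBr by (unfold M in HrM; lia).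
  pose proof (count_mono' P _ _ Hr3) as Hcn. apply le_INR in Hcn.
  fold (C n) in Hcn. fold (C (theta r)) in Hcn.
  pose proof (pos_INR (theta N)).
  assert (HCn : C n <= K + e / 2 * INR n).
  { assert (eps' * INR (theta r) <= e / 2 * INR n).
    { assert (eps' * H = e / 2) by (unfold eps'; field; lra).
      assert (eps' * INR (theta r) <= eps' * (H * INR (theta (r-1)%nat))) by
        (apply Rmult_le_compat_l; lra).
      replace (eps' * (H * INR (theta (r-1)%nat))) with (e/2 * INR (theta (r-1)%nat)) in H3
        by (rewrite <- H2; ring).
      assert (e / 2 * INR (theta (r-1)%nat) <= e / 2 * INR n)
        by (apply Rmult_le_compat_l; [pose proof (cond_pos e); lra | lra]).
      lra. }
    fold K in HBr. nra. }
  assert (Hn0 : 0 < INR n) by lra.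
  assert (HC0 : 0 <= C n) by (unfold C; apply pos_INR).
  fold (C n). rewrite Rminus_0_r.
  rewrite Rabs_pos_eq by (unfold Rdiv; apply Rmult_le_pos; [lra| left; apply Rinv_0_lt_compat; lra]).
  pose proof (Rle_abs (K * / INR n)).
  assert (C n * / INR n <= (K + e / 2 * INR n) * / INR n).
  { apply Rmult_le_compat_r; [left; apply Rinv_0_lt_compat; lra | lra]. }
  replace ((K + e / 2 * INR n) * / INR n) with (K * / INR n + e / 2) in H3 by (field; lra).
  unfold Rdiv. lra.
Qed.
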